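(* Let $k\ge1$ be an integer, $a\in\mathbb{R}$ with $0<|a|<1$, $\sigma>0$, and let $\{\alpha_n\}$ be a sequence of real numbers with $|\alpha_n|\le\sigma$ for all $n$. If $$\sigma<\frac{1-|a|}{1-|a|^k},$$ then every real solution of $$x_{n+1}=ax_n+\alpha_n\tanh\big(x_n-a^kx_{n-k}\big),\quad n\ge0,$$ converges to $0$.
   Context: Solutions are generated by iteration from arbitrary real initial values $x_0,x_{-1},\dots,x_{-k}$. *)

(* Defs.v *)
From Stdlib Require Import Reals.

(* Main.v *)
Require Import Defs.
From Stdlib Require Import Reals Lra Lia.
Open Scope R_scope.

Lemma g_incr : increasing (fun u => u * cosh u - sinh u).
Proof.
  assert (pr : derivable (fun u => u * cosh u - sinh u)).
  { intro x. exists (x * sinh x).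
    replace (x * sinh x) with ((1 * cosh x + x * sinh x) - cosh x) by ring.
    apply (derivable_pt_lim_minus (fun u => u * cosh u) sinh).
    - apply (derivable_pt_lim_mult id cosh). apply derivable_pt_lim_id.
      apply derivable_pt_lim_cosh.
    - apply derivable_pt_lim_sinh. }
  apply (nonneg_derivative_1 _ pr). intro x.
  rewrite (derive_pt_eq_0 _ x (x * sinh x)).
  - destruct (Rtotal_order x 0) as [H|[H|H]].
    + assert (sinh x < 0) by (rewrite <- sinh_0; apply sinh_lt; lra). nra.
    + subst; lra.
    + assert (sinh 0 < sinh x) by (apply sinh_lt; lra). rewrite sinh_0 in *. nra.
  - replace (x * sinh x) with ((1 * cosh x + x * sinh x) - cosh x) by ring.
    apply (derivable_pt_lim_minus (fun u => u * cosh u) sinh).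
    + apply (derivable_pt_lim_mult id cosh). apply derivable_pt_lim_id.
      apply derivable_pt_lim_cosh.
    + apply derivable_pt_lim_sinh.
Qed.

Lemma tanh_le u : Rabs (tanh u) <= Rabs u.
Proof.
  assert (Hc : 0 < cosh u).
  { unfold cosh. pose proof (exp_pos u). pose proof (exp_pos (-u)). lra. }
  pose proof (g_incr 0 u) as H1. pose proof (g_incr u 0) as H2.
  cbv beta in H1, H2. rewrite sinh_0, cosh_0 in H1, H2.
  unfold tanh. unfold Rdiv; rewrite Rabs_mult, Rabs_inv. rewrite (Rabs_right (cosh u)) by lra.
  apply Rmult_le_reg_r with (cosh u); auto.
  unfold Rdiv. rewrite Rmult_assoc, Rinv_l, Rmult_1_r by lra.
  destruct (Rle_dec 0 u).
  - specialize (H1 r). assert (0 <= sinh u).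
    { destruct (Req_dec u 0). subst; rewrite sinh_0; lra.
      rewrite <- sinh_0; left; apply sinh_lt; lra. }
    rewrite !Rabs_right by lra. lra.
  - assert (u <= 0) by lra. specialize (H2 H).
    assert (sinh u < 0) by (rewrite <- sinh_0; apply sinh_lt; lra).
    rewrite !Rabs_left by lra. lra.
Qed.

Lemma powc_mono c m p : 0 <= c <= 1 -> (m <= p)%nat -> c ^ p <= c ^ m.
Proof.
  intros Hc Hmp. replace p with (m + (p - m))%nat by lia. rewrite pow_add.
  assert (0 <= c ^ (p - m) <= 1).
  { split. apply pow_le; lra. rewrite <- (pow1 (p - m)). apply pow_incr; lra. }
  assert (0 <= c ^ m) by (apply pow_le; lra). nra.
Qed.

Lemma y_conv (a : R) (D y : nat -> R) :
  Rabs a < 1 -> Un_cv D 0 -> (forall n, y (S n) = a * y n + D n) -> Un_cv y 0.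
Proof.
  intros Ha HD Hy eps Heps. set (b := Rabs a).
  assert (Hb : 0 <= b) by apply Rabs_pos.
  destruct (HD (eps * (1 - b) / 2)) as [N HN].
  { apply Rdiv_lt_0_compat; [apply Rmult_lt_0_compat|]. lra. unfold b in *; lra. lra. }
  assert (Hm : forall m, Rabs (y (N + m)%nat) <= b ^ m * Rabs (y N) + eps / 2).
  { induction m.
    - rewrite Nat.add_0_r. simpl. lra.
    - replace (N + S m)%nat with (S (N + m)) by lia. rewrite Hy.
      specialize (HN (N + m)%nat ltac:(lia)). unfold R_dist in HN.
      rewrite Rminus_0_r in HN.
      eapply Rle_trans. apply Rabs_triang. rewrite Rabs_mult. fold b.
      simpl. assert (b * Rabs (y (N+m)%nat) <= b * (b ^ m * Rabs (y N) + eps / 2))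
        by (apply Rmult_le_compat_l; auto).
      nra. }
  set (Y := Rabs (y N)). assert (HY : 0 <= Y) by apply Rabs_pos.
  destruct (pow_lt_1_zero a Ha (eps / 2 / (Y + 1))) as [M HM].
  { apply Rdiv_lt_0_compat; lra. }
  exists (N + M)%nat. intros n Hn. unfold R_dist. rewrite Rminus_0_r.
  replace n with (N + (n - N))%nat by lia.
  eapply Rle_lt_trans. apply Hm.
  specialize (HM (n - N)%nat ltac:(lia)). rewrite <- RPow_abs in HM. fold b in HM.
  assert (b ^ (n - N) * Y <= eps / 2 / (Y + 1) * Y).
  { apply Rmult_le_compat_r; lra. }
  assert (eps / 2 / (Y + 1) * Y < eps / 2).
  { unfold Rdiv. apply Rmult_lt_reg_r with (Y + 1). lra.
    replace (eps * / 2 * / (Y + 1) * Y * (Y + 1)) with (eps * / 2 * Y) by (field; lra).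
    nra. }
  fold Y. lra.
Qed.
Fixpoint Mx (D : nat -> R) (m : nat) : R :=
  match m with O => 0 | S m' => Rmax (Mx D m') (Rabs (D m')) end.

Lemma Mx_ge D m : 0 <= Mx D m.
Proof. induction m; simpl. lra. eapply Rle_trans. apply IHm. apply Rmax_l. Qed.

Lemma Mx_bound D m n : (n < m)%nat -> Rabs (D n) <= Mx D m.
Proof.
  induction m; intros H. lia. simpl. destruct (Nat.eq_dec n m).
  subst. apply Rmax_r. eapply Rle_trans. apply IHm. lia. apply Rmax_l.
Qed.

Lemma Tbound (a : R) (y : nat -> R) n K m :
  Rabs a < 1 -> 0 <= K ->
  (forall j, (j < m)%nat -> Rabs (y (S (n + j)) - a * y (n + j)%nat) <= K) ->
  Rabs (y (n + m)%nat - a ^ m * y n) <= K * (1 - Rabs a ^ m) / (1 - Rabs a).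
Proof.
  intros Ha HK. induction m; intros H.
  - rewrite Nat.add_0_r. simpl. replace (y n - 1 * y n) with 0 by ring.
    rewrite Rabs_R0. unfold Rdiv. replace (K * (1 - 1)) with 0 by ring. lra.
  - replace (y (n + S m)%nat - a ^ S m * y n) with
      ((y (S (n + m)) - a * y (n + m)%nat) + a * (y (n + m)%nat - a ^ m * y n)).
    2:{ replace (n + S m)%nat with (S (n + m)) by lia. simpl. ring. }
    eapply Rle_trans. apply Rabs_triang. rewrite Rabs_mult.
    assert (H1 := H m ltac:(lia)).
    assert (H2 := IHm ltac:(intros; apply H; lia)).
    assert (Hb : 0 <= Rabs a) by apply Rabs_pos.
    assert (Rabs a * Rabs (y (n + m)%nat - a ^ m * y n) <=
            Rabs a * (K * (1 - Rabs a ^ m) / (1 - Rabs a))) by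
      (apply Rmult_le_compat_l; auto).
    replace (K * (1 - Rabs a ^ S m) / (1 - Rabs a)) with
      (K + Rabs a * (K * (1 - Rabs a ^ m) / (1 - Rabs a))).
    lra. simpl. field. lra.
Qed.


Theorem mainTheorem8 (k : nat) (a sigma : R) (alpha : nat -> R) (y : nat -> R) :
  (1 <= k)%nat ->
  0 < Rabs a < 1 ->
  0 < sigma ->
  (forall n, Rabs (alpha n) <= sigma) ->
  sigma < (1 - Rabs a) / (1 - Rabs a ^ k) ->
  (forall n : nat, y (n + k + 1)%nat = a * y (n + k)%nat + alpha n * tanh (y (n + k)%nat - a ^ k * y n)) ->
  Un_cv y 0.
Proof.
  intros Hk Ha Hs Hal Hsig Hrec.
  set (b := Rabs a) in *.
  set (D := fun m => y (S m) - a * y m).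
  assert (Hbk : 0 <= b ^ k < 1) by (apply pow_lt_1_compat; lia || (unfold b in *; lra)).
  set (c := sigma * (1 - b ^ k) / (1 - b)).
  assert (Hc1 : c < 1).
  { unfold c. apply Rmult_lt_reg_r with (1 - b). lra.
    unfold Rdiv. rewrite Rmult_assoc, Rinv_l, Rmult_1_r by lra.
    apply Rmult_lt_reg_r with (/ (1 - b ^ k)). apply Rinv_0_lt_compat; lra.
    rewrite Rmult_assoc, Rinv_r, Rmult_1_r by lra. rewrite Rmult_1_l. exact Hsig. }
  assert (Hc0 : 0 <= c).
  { unfold c. apply Rmult_le_pos. apply Rmult_le_pos; lra.
    left; apply Rinv_0_lt_compat; lra. }
  set (B := Mx D k). assert (HB : 0 <= B) by apply Mx_ge.
  assert (Hdec : forall N n, (n < N)%nat -> Rabs (D n) <= B * c ^ (n / k)).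
  { induction N; intros n Hn. lia.
    destruct (Nat.lt_ge_cases n N) as [Hl|Hge]. apply IHN; auto.
    assert (n = N) by lia. subst n.
    destruct (Nat.lt_ge_cases N k) as [Hl|Hge2].
    - rewrite Nat.div_small by auto. simpl. rewrite Rmult_1_r. apply Mx_bound; auto.
    - set (p := (N - k)%nat). replace N with (p + k)%nat by lia.
      assert (Hdiv : ((p + k) / k = p / k + 1)%nat).
      { rewrite <- (Nat.mul_1_l k) at 1. apply Nat.div_add. lia. }
      rewrite Hdiv.
      unfold D at 1. replace (S (p + k)) with (p + k + 1)%nat by lia. rewrite Hrec.
      replace (a * y (p + k)%nat + alpha p * tanh (y (p + k)%nat - a ^ k * y p) -
               a * y (p + k)%nat) with (alpha p * tanh (y (p + k)%nat - a ^ k * y p)) by ring.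
      rewrite Rabs_mult.
      assert (HT : Rabs (y (p + k)%nat - a ^ k * y p) <= B * c ^ (p / k) * (1 - b ^ k) / (1 - b)).
      { apply Tbound. unfold b in *; lra. apply Rmult_le_pos; auto. apply pow_le; auto.
        intros j Hj. fold (D (p + j)%nat). eapply Rle_trans. apply IHN. lia.
        apply Rmult_le_compat_l; auto. apply powc_mono. lra.
        apply Nat.Div0.div_le_mono. lia. }
      pose proof (tanh_le (y (p + k)%nat - a ^ k * y p)).
      pose proof (Hal p). pose proof (Rabs_pos (alpha p)).
      pose proof (Rabs_pos (tanh (y (p + k)%nat - a ^ k * y p))).
      replace (B * c ^ (p / k + 1)) with (sigma * (B * c ^ (p / k) * (1 - b ^ k) / (1 - b))).
      2:{ rewrite pow_add. unfold c. simpl. field. lra. }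
      apply Rmult_le_compat; auto. lra. }
  assert (HD : Un_cv D 0).
  { intros eps Heps.
    destruct (pow_lt_1_zero c ltac:(rewrite Rabs_right; lra) (eps / (B + 1))) as [N0 HN0].
    apply Rdiv_lt_0_compat; lra.
    exists (N0 * k)%nat. intros n Hn. unfold R_dist. rewrite Rminus_0_r.
    eapply Rle_lt_trans. apply (Hdec (S n)). lia.
    assert (Hnk : (N0 <= n / k)%nat).
    { rewrite <- (Nat.div_mul N0 k) by lia. apply Nat.Div0.div_le_mono. lia. }
    specialize (HN0 _ Hnk). rewrite Rabs_right in HN0 by (apply Rle_ge, pow_le; lra).
    assert (B * c ^ (n / k) <= B * (eps / (B + 1))) by (apply Rmult_le_compat_l; lra).
    assert (B * (eps / (B + 1)) < eps).
    { apply Rmult_lt_reg_r with (B + 1). lra.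
      replace (B * (eps / (B + 1)) * (B + 1)) with (B * eps) by (field; lra). nra. }
    lra. }
  apply (y_conv a D y). unfold b in *; lra. exact HD. intro n; unfold D; ring.
Qed.
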